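(* For every integer $a\geq 1$, $$\sigma(2,2a-1)=2a(2a-1)\lambda(2a+1)-8\sum_{j=1}^{a-1}j\,\lambda(2a-2j)\lambda(2j+1),$$ where an empty sum equals $0$.
   Context: For integers $t\geq 1$ and $n\geq 1$ let $S_n^{(t)}=\sum_{k=1}^{n}\frac{1}{(2k-1)^t}$, and for integers $s\geq 2$, $t\geq 1$ let $\sigma(s,t)=\sum_{n\geq 1}\frac{S_n^{(t)}}{n^s}$. For real $s>1$, $\lambda(s)=\sum_{n\geq 1}\frac{1}{(2n-1)^s}=(1-2^{-s})\zeta(s)$. *)

(* Defs.v *)
From Stdlib Require Import Reals.
From Coquelicot Require Import Coquelicot.
Open Scope R_scope.

Definition S_odd (t n : nat) : R :=
  sum_n_m (fun k => / (2 * INR k - 1) ^ t) 1 n.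

Definition sigma_odd (s t : nat) : R :=
  Series (fun m => S_odd t (S m) / (INR (S m)) ^ s).

(* lambda_odd(s) = sum_{n>=1} 1/(2n-1)^s, for integer s >= 2 *)
Definition lambda_odd (s : nat) : R :=
  Series (fun m => / (2 * INR (S m) - 1) ^ s).

Arguments S_odd (t n)%_nat_scope.
Arguments sigma_odd (s t)%_nat_scope.
Arguments lambda_odd s%_nat_scope.

(* Main.v *)
Require Import Defs.
From Stdlib Require Import Reals.
From Coquelicot Require Import Coquelicot.
From Stdlib Require Import Lra Lia Arith.
Open Scope R_scope.


Lemma is_series_of_lim (a : nat -> R) (l : R) :
  is_lim_seq (sum_n a) l -> is_series a l.
Proof. intros H; exact H. Qed.

Lemma lim_of_is_series (a : nat -> R) (l : R) :
  is_series a l -> is_lim_seq (sum_n a) l.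
Proof. intros H; exact H. Qed.

Lemma sum_n_S_R (a : nat -> R) n : sum_n a (S n) = sum_n a n + a (S n).
Proof. rewrite sum_Sn. reflexivity. Qed.

Lemma is_series_zero : is_series (fun _ : nat => 0) 0.
Proof.
  apply is_series_of_lim.
  apply is_lim_seq_ext with (fun _ => 0).
  - intros n; induction n. rewrite sum_O; reflexivity.
    rewrite sum_n_S_R, <- IHn; ring.
  - apply is_lim_seq_const.
Qed.

Lemma Series_zero : Series (fun _ : nat => 0) = 0.
Proof. apply is_series_unique, is_series_zero. Qed.

Lemma Series_nonneg (a : nat -> R) : (forall n, 0 <= a n) -> 0 <= Series a.
Proof.
  intros H. destruct (ex_series_dec a) as [E|E].
  - rewrite <- Series_zero. apply Series_le; auto. intros; split; [lra|auto].
  - unfold Series. 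
    assert (Hm : forall n, sum_n a n <= sum_n a (S n)).
    { intros n; rewrite sum_n_S_R; specialize (H (S n)); lra. }
    destruct (ex_lim_seq_incr (sum_n a) Hm) as [l Hl].
    rewrite (is_lim_seq_unique _ _ Hl).
    destruct l as [l| |]; simpl.
    + exfalso; apply E; exists l; exact Hl.
    + lra.
    + assert (Hle := is_lim_seq_le (fun _ => 0) (sum_n a) 0 m_infty).
      exfalso. simpl in Hle. apply Hle; auto.
      intros n; induction n. rewrite sum_O; auto. rewrite sum_n_S_R; specialize (H (S n)); lra.
      apply is_lim_seq_const.
Qed.

Lemma sum_n_nonneg (a : nat -> R) : (forall n, 0 <= a n) -> forall N, 0 <= sum_n a N.
Proof.
  intros H N; induction N. rewrite sum_O; auto. rewrite sum_n_S_R; specialize (H (S N)); lra.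
Qed.

Lemma sum_le_Series (a : nat -> R) : (forall n, 0 <= a n) -> ex_series a ->
  forall N, sum_n a N <= Series a.
Proof.
  intros H E N.
  rewrite (Series_incr_n a (S N)); [|lia|auto]. simpl pred.
  rewrite <- sum_n_Reals.
  assert (0 <= Series (fun k => a (S N + k)%nat)) by (apply Series_nonneg; auto).
  lra.
Qed.

Lemma term_le_Series (a : nat -> R) : (forall n, 0 <= a n) -> ex_series a ->
  forall N, a N <= Series a.
Proof.
  intros H E N. eapply Rle_trans; [|apply (sum_le_Series a H E N)].
  destruct N. rewrite sum_O; lra.
  rewrite sum_n_S_R. assert (0 <= sum_n a N) by (apply sum_n_nonneg; auto). lra.
Qed.

Lemma ex_series_pos_bnd (a : nat -> R) M : (forall n, 0 <= a n) ->
  (forall N, sum_n a N <= M) -> ex_series a /\ Series a <= M.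
Proof.
  intros H HM.
  assert (Hm : forall n, sum_n a n <= sum_n a (S n)).
  { intros n; rewrite sum_n_S_R; specialize (H (S n)); lra. }
  destruct (ex_lim_seq_incr (sum_n a) Hm) as [l Hl].
  assert (Hle := is_lim_seq_le (sum_n a) (fun _ => M) l M HM Hl (is_lim_seq_const M)).
  destruct l as [l| |]; simpl in Hle; try contradiction.
  - split. exists l; exact Hl.
    unfold Series. rewrite (is_lim_seq_unique _ _ Hl). simpl. exact Hle.
  - exfalso.
    assert (Hle2 := is_lim_seq_le (fun _ => 0) (sum_n a) 0 m_infty).
    simpl in Hle2. apply Hle2; auto. apply sum_n_nonneg; auto. apply is_lim_seq_const.
Qed.

Lemma Series_sum_n_m (g : nat -> nat -> R) lo hi :
  (forall k, (lo <= k <= hi)%nat -> ex_series (g k)) ->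
  ex_series (fun i => sum_n_m (fun k => g k i) lo hi) /\
  Series (fun i => sum_n_m (fun k => g k i) lo hi) = sum_n_m (fun k => Series (g k)) lo hi.
Proof.
  induction hi; intros E.
  - destruct lo.
    + split.
      * eapply ex_series_ext; [|apply (E 0%nat); lia]. intros; rewrite sum_n_n; reflexivity.
      * rewrite sum_n_n. apply Series_ext. intros; rewrite sum_n_n; reflexivity.
    + split.
      * eapply ex_series_ext; [|exists 0; apply is_series_zero]. intros; simpl.
        rewrite sum_n_m_zero; [reflexivity|lia].
      * rewrite sum_n_m_zero by lia. transitivity (Series (fun _ => 0)).
        apply Series_ext. intros; rewrite sum_n_m_zero; [reflexivity|lia].
        apply Series_zero.
  - destruct (le_lt_dec lo (S hi)) as [Hl|Hl].
    + destruct (le_lt_dec lo hi) as [Hl2|Hl2].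
      * destruct IHhi as [IE IS]. intros k Hk; apply E; lia.
        assert (Heq : forall i, sum_n_m (fun k => g k i) lo (S hi) =
                            sum_n_m (fun k => g k i) lo hi + g (S hi) i).
        { intros i; rewrite sum_n_Sm; auto. }
        assert (E2 : ex_series (g (S hi))) by (apply E; lia).
        split.
        -- eapply ex_series_ext. intros i; symmetry; apply Heq.
           apply (ex_series_plus _ _ IE E2).
        -- rewrite (Series_ext _ _ Heq). rewrite Series_plus; auto.
           rewrite sum_n_Sm; auto. rewrite IS. reflexivity.
      * assert (lo = S hi) by lia. subst lo. split.
        -- eapply ex_series_ext; [|apply (E (S hi)); lia]. intros; rewrite sum_n_n; reflexivity.
        -- rewrite sum_n_n. apply Series_ext. intros; rewrite sum_n_n; reflexivity.
    + split.
      * eapply ex_series_ext; [|exists 0; apply is_series_zero]. intros; simpl.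
        rewrite sum_n_m_zero; [reflexivity|lia].
      * rewrite sum_n_m_zero by lia. transitivity (Series (fun _ => 0)).
        apply Series_ext. intros; rewrite sum_n_m_zero; [reflexivity|lia].
        apply Series_zero.
Qed.

Lemma fub_le (a : nat -> nat -> R) :
  (forall i j, 0 <= a i j) -> (forall i, ex_series (a i)) ->
  ex_series (fun i => Series (a i)) ->
  (forall j, ex_series (fun i => a i j)) /\
  ex_series (fun j => Series (fun i => a i j)) /\
  Series (fun j => Series (fun i => a i j)) <= Series (fun i => Series (a i)).
Proof.
  intros Hp Er Es.
  assert (Hs : forall i, 0 <= Series (a i)) by (intros; apply Series_nonneg; auto).
  assert (Ec : forall j, ex_series (fun i => a i j)).
  { intros j. apply (ex_series_pos_bnd _ (Series (fun i => Series (a i)))); auto.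
    intros N. eapply Rle_trans; [|apply sum_le_Series; auto].
    apply sum_n_m_le. intros k. apply term_le_Series; auto. }
  split; auto.
  apply ex_series_pos_bnd.
  - intros j; apply Series_nonneg; auto.
  - intros N. unfold sum_n.
    destruct (Series_sum_n_m (fun j i => a i j) 0 N (fun k _ => Ec k)) as [E1 E2].
    rewrite <- E2. apply Series_le; auto.
    intros i; split.
    + apply sum_n_nonneg; auto.
    + apply sum_le_Series; auto.
Qed.

Lemma fubini (a : nat -> nat -> R) :
  (forall i j, 0 <= a i j) -> (forall i, ex_series (a i)) ->
  ex_series (fun i => Series (a i)) ->
  (forall j, ex_series (fun i => a i j)) /\
  ex_series (fun j => Series (fun i => a i j)) /\
  Series (fun j => Series (fun i => a i j)) = Series (fun i => Series (a i)).
Proof.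
  intros Hp Er Es.
  destruct (fub_le a Hp Er Es) as [Ec [Ecs Hle]].
  destruct (fub_le (fun j i => a i j) (fun j i => Hp i j) Ec Ecs) as [_ [_ Hle2]].
  repeat split; auto. apply Rle_antisym; auto.
Qed.

Lemma ex_series_le_R (a b : nat -> R) : (forall n, 0 <= a n <= b n) -> ex_series b -> ex_series a.
Proof.
  intros H E. apply (@ex_series_le R_AbsRing R_CompleteNormedModule a b); auto.
  intros n. specialize (H n). change (norm (a n)) with (Rabs (a n)).
  rewrite Rabs_pos_eq; lra.
Qed.

Lemma sum_n_fin (b : nat -> R) N : (forall n, (N < n)%nat -> b n = 0) ->
  forall n, @eq R (sum_n b (n + N)) (sum_n b N).
Proof.
  intros H n; induction n. reflexivity.
  replace (S n + N)%nat with (S (n + N)) by lia.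
  rewrite sum_n_S_R, IHn, H by lia. ring.
Qed.

Lemma is_series_fin (b : nat -> R) N : (forall n, (N < n)%nat -> b n = 0) ->
  is_series b (sum_n b N).
Proof.
  intros H. apply is_series_of_lim.
  apply (is_lim_seq_incr_n _ N).
  apply is_lim_seq_ext with (fun _ => sum_n b N).
  intros n; symmetry; apply sum_n_fin; auto.
  apply is_lim_seq_const.
Qed.

Lemma ex_series_fin (b : nat -> R) N : (forall n, (N < n)%nat -> b n = 0) -> ex_series b.
Proof. intros H; eexists; apply (is_series_fin b N H). Qed.

Definition pt (m : nat) (c : R) : nat -> R := fun n => if Nat.eq_dec n m then c else 0.

Lemma is_series_pt m c : is_series (pt m c) c.
Proof.
  assert (H0 : forall N, (N < m)%nat -> @eq R (sum_n (pt m c) N) 0).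
  { intros N; induction N; intros HN.
    - rewrite sum_O; unfold pt; destruct (Nat.eq_dec 0 m); [lia|reflexivity].
    - rewrite sum_n_S_R, IHN by lia. unfold pt; destruct (Nat.eq_dec (S N) m); [lia|ring]. }
  assert (E : @eq R (sum_n (pt m c) m) c).
  { destruct m. rewrite sum_O; unfold pt; destruct (Nat.eq_dec 0 0); [reflexivity|lia].
    rewrite sum_n_S_R, H0 by lia. unfold pt; destruct (Nat.eq_dec (S m) (S m)); [ring|lia]. }
  assert (H := is_series_fin (pt m c) m).
  rewrite E in H. apply H.
  intros n Hn; unfold pt; destruct (Nat.eq_dec n m); [lia|reflexivity].
Qed.

Lemma Series_pt m c : Series (pt m c) = c.
Proof. apply is_series_unique, is_series_pt. Qed.

Lemma ex_series_pt m c : ex_series (pt m c).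
Proof. eexists; apply is_series_pt. Qed.

Definition shiftk (k : nat) (g : nat -> R) : nat -> R :=
  fun n => if le_dec k n then g (n - k)%nat else 0.

Lemma shiftk_ex k g : ex_series g -> ex_series (shiftk k g).
Proof.
  intros E. apply (ex_series_incr_n _ k).
  eapply ex_series_ext; [|exact E]. intros n; unfold shiftk.
  destruct (le_dec k (k + n)); [|lia]. f_equal; lia.
Qed.

Lemma Series_shiftk k g : Series (shiftk k g) = Series g.
Proof.
  rewrite (Series_incr_n_aux _ k).
  - apply Series_ext. intros n; unfold shiftk.
    destruct (le_dec k (k + n)); [|lia]. f_equal; lia.
  - intros j Hj; unfold shiftk; destruct (le_dec k j); [lia|reflexivity].
Qed.

Lemma shiftk_nonneg k g : (forall n, 0 <= g n) -> forall n, 0 <= shiftk k g n.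
Proof. intros H n; unfold shiftk; destruct (le_dec k n); auto; lra. Qed.

Lemma tele1 (b : nat -> R) : is_lim_seq b 0 -> is_series (fun n => b n - b (S n)) (b 0%nat).
Proof.
  intros H. apply is_series_of_lim.
  apply is_lim_seq_ext with (fun N => b 0%nat - b (S N)).
  - intros N; induction N. rewrite sum_O; reflexivity.
    rewrite sum_n_S_R, <- IHN. ring.
  - assert (Hs : is_lim_seq (fun n => b (S n)) 0) by (apply (is_lim_seq_incr_1 b 0); exact H).
    assert (H2 := is_lim_seq_minus' (fun _ => b 0%nat) (fun N => b (S N)) (b 0%nat) 0
                  (is_lim_seq_const _) Hs).
    rewrite Rminus_0_r in H2. exact H2.
Qed.

Lemma lim_inv_lin c d : 0 < c -> 0 < d -> is_lim_seq (fun k => / (c + d * INR k)) 0.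
Proof.
  intros Hc Hd.
  assert (Hp : is_lim_seq (fun k => c + d * INR k) p_infty).
  { apply is_lim_seq_le_p_loc with (fun k => INR k * d).
    - exists 0%nat. intros n _. assert (0 <= INR n) by apply pos_INR. nra.
    - apply (is_lim_seq_mult INR (fun _ => d) p_infty d p_infty).
      apply is_lim_seq_INR. apply is_lim_seq_const.
      apply is_Rbar_mult_p_infty_pos. simpl; exact Hd. }
  apply (is_lim_seq_inv _ _ Hp). discriminate.
Qed.

Lemma sq_tail x : 1 < x ->
  ex_series (fun k => / (x + 2 * INR k) ^ 2) /\
  Series (fun k => / (x + 2 * INR k) ^ 2) <= / (2 * (x - 1)).
Proof.
  intros Hx.
  set (b := fun k => / 2 * / (x - 1 + 2 * INR k)).
  assert (Ht : is_series (fun k => b k - b (S k)) (b 0%nat)).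
  { apply tele1. unfold b.
    replace 0 with (/2 * 0) by ring. apply (is_lim_seq_scal_l _ (/2) 0).
    apply lim_inv_lin; lra. }
  assert (Hb : forall k, 0 <= / (x + 2 * INR k) ^ 2 <= b k - b (S k)).
  { intros k. unfold b. rewrite S_INR.
    assert (0 <= INR k) by apply pos_INR.
    split. apply Rlt_le, Rinv_0_lt_compat. apply pow_lt; lra.
    replace (/ 2 * / (x - 1 + 2 * INR k) - / 2 * / (x - 1 + 2 * (INR k + 1)))
      with (/ ((x + 2 * INR k) ^ 2 - 1)).
    2:{ assert (x - 1 + 2 * INR k <> 0) by lra.
        assert (x - 1 + 2 * (INR k + 1) <> 0) by lra.
        assert ((x + 2 * INR k) ^ 2 - 1 <> 0) by nra.
        field; auto. }
    apply Rinv_le_contravar. nra. lra. }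
  assert (He : ex_series (fun k => b k - b (S k))) by (eexists; exact Ht).
  split.
  - apply (ex_series_le_R _ (fun k => b k - b (S k))); auto.
  - eapply Rle_trans. apply (Series_le _ (fun k => b k - b (S k))); auto.
    rewrite (is_series_unique _ _ Ht). unfold b. simpl. rewrite Rmult_0_r, Rplus_0_r.
    rewrite Rinv_mult. lra.
Qed.

Definition od (n : nat) : R := 2 * INR n + 1.

Lemma od_ge1 n : 1 <= od n.
Proof. unfold od; assert (0 <= INR n) by apply pos_INR; lra. Qed.
Lemma od_pos n : 0 < od n.
Proof. assert (H := od_ge1 n); lra. Qed.
Lemma od_neq0 n : od n <> 0.
Proof. assert (H := od_ge1 n); lra. Qed.

Lemma sum_n_scal_l_R (C : R) (X : nat -> R) N :
  @eq R (sum_n (fun k => C * X k) N) (C * sum_n X N).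
Proof.
  induction N. rewrite !sum_O; reflexivity.
  rewrite !sum_n_S_R, IHN. ring.
Qed.

Lemma lam_eq s : lambda_odd s = Series (fun n => / od n ^ s).
Proof. unfold lambda_odd. apply Series_ext; intros n. unfold od. rewrite S_INR. f_equal. f_equal. ring. Qed.

Lemma inv_od_sq_ex : ex_series (fun n => / od n ^ 2).
Proof.
  apply ex_series_incr_1.
  destruct (sq_tail 3) as [E _]; [lra|].
  eapply ex_series_ext; [|exact E]. intros n; unfold od; rewrite S_INR. f_equal; f_equal; ring.
Qed.

Lemma inv_od_pow_le n s : (1 <= s)%nat -> / od n ^ s <= / od n.
Proof.
  intros Hs. apply Rinv_le_contravar. apply od_pos.
  rewrite <- (pow_1 (od n)) at 1. apply Rle_pow; auto. apply od_ge1.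
Qed.

Lemma inv_od_pow_le2 n s : (2 <= s)%nat -> / od n ^ s <= / od n ^ 2.
Proof.
  intros Hs. apply Rinv_le_contravar. apply pow_lt, od_pos.
  apply Rle_pow; auto. apply od_ge1.
Qed.

Lemma inv_od_pow_pos n s : 0 < / od n ^ s.
Proof. apply Rinv_0_lt_compat, pow_lt, od_pos. Qed.

Lemma lam_ex s : (2 <= s)%nat -> ex_series (fun n => / od n ^ s).
Proof.
  intros Hs. apply (ex_series_le_R _ (fun n => / od n ^ 2)); [|apply inv_od_sq_ex].
  intros n; split. apply Rlt_le, inv_od_pow_pos. apply inv_od_pow_le2; auto.
Qed.

Lemma f_bnd n : ex_series (fun k => / (od n + od k) ^ 2) /\
  Series (fun k => / (od n + od k) ^ 2) <= / (2 * od n).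
Proof.
  destruct (sq_tail (2 * INR n + 2)) as [E S]. assert (0 <= INR n) by apply pos_INR; lra.
  assert (Heq : forall k, / (od n + od k) ^ 2 = / (2 * INR n + 2 + 2 * INR k) ^ 2).
  { intros k; unfold od; f_equal; f_equal; ring. }
  split. eapply ex_series_ext; [|exact E]. intros; symmetry; apply Heq.
  rewrite (Series_ext _ _ Heq). replace (2 * od n) with (2 * (2 * INR n + 2 - 1)) by (unfold od; ring).
  exact S.
Qed.

Definition ff (n : nat) : R := Series (fun k => / (od n + od k) ^ 2).

Lemma ff_nonneg n : 0 <= ff n.
Proof. apply Series_nonneg. intros k. apply Rlt_le, Rinv_0_lt_compat, pow_lt.
  assert (H1 := od_pos n); assert (H2 := od_pos k); lra. Qed.

Definition AA (p : nat) : R := Series (fun n => / od n ^ p * ff n).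

Lemma AA_ex p : (1 <= p)%nat -> ex_series (fun n => / od n ^ p * ff n).
Proof.
  intros Hp. apply (ex_series_le_R _ (fun n => / od n ^ 2)); [|apply inv_od_sq_ex].
  intros n. split.
  - apply Rmult_le_pos. apply Rlt_le, inv_od_pow_pos. apply ff_nonneg.
  - destruct (f_bnd n) as [_ Hf]. fold (ff n) in Hf.
    assert (H1 := inv_od_pow_le n p Hp). assert (H2 := inv_od_pow_pos n p).
    assert (H3 := ff_nonneg n). assert (H4 := od_ge1 n).
    assert (H5 : / (2 * od n) <= / od n). { apply Rinv_le_contravar; lra. }
    assert (H6 : 0 < / od n) by (apply Rinv_0_lt_compat; lra).
    replace (/ od n ^ 2) with (/ od n * / od n) by (field; lra).
    apply Rmult_le_compat; lra.
Qed.

Lemma tri (c : nat -> nat -> R) : (forall k m, 0 <= c k m) ->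
  (forall k, ex_series (fun j => c k (k + j)%nat)) ->
  ex_series (fun k => Series (fun j => c k (k + j)%nat)) ->
  Series (fun m => sum_n (fun k => c k m) m) = Series (fun k => Series (fun j => c k (k + j)%nat)).
Proof.
  intros Hp Er Es.
  set (a := fun k m => shiftk k (fun j => c k (k + j)%nat) m).
  assert (Ha : forall k m, 0 <= a k m).
  { intros k m; unfold a; apply shiftk_nonneg; auto. }
  assert (Ear : forall k, ex_series (a k)) by (intros k; apply shiftk_ex; auto).
  assert (Hrow : forall k, Series (a k) = Series (fun j => c k (k + j)%nat)).
  { intros k; unfold a; apply Series_shiftk. }
  assert (Eas : ex_series (fun k => Series (a k))).
  { eapply ex_series_ext; [|exact Es]. intros; symmetry; apply Hrow. }
  destruct (fubini a Ha Ear Eas) as [_ [_ Heq]].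
  rewrite (Series_ext _ _ Hrow) in Heq. rewrite <- Heq.
  apply Series_ext. intros m. symmetry.
  apply is_series_unique.
  assert (Hc : forall k, (k <= m)%nat -> a k m = c k m).
  { intros k Hk. unfold a, shiftk. destruct (le_dec k m); [|lia]. f_equal; lia. }
  assert (Hs : @eq R (sum_n (fun k => a k m) m) (sum_n (fun k => c k m) m)).
  { unfold sum_n. apply sum_n_m_ext_loc. intros k Hk; apply Hc; lia. }
  rewrite <- Hs. apply is_series_fin.
  intros n Hn. unfold a, shiftk. destruct (le_dec n m); [lia|reflexivity].
Qed.

Lemma sum_n_scal_r_R (C : R) (X : nat -> R) N :
  @eq R (sum_n (fun k => X k * C) N) (sum_n X N * C).
Proof.
  induction N. rewrite !sum_O; reflexivity.
  rewrite !sum_n_S_R, IHN. ring.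
Qed.

Lemma ex_series_scal_R (C : R) (a : nat -> R) : ex_series a -> ex_series (fun n => C * a n).
Proof. intros E. apply (ex_series_scal C a E). Qed.

Lemma od_add k j : 2 * INR (k + j) + 2 = od k + od j.
Proof. unfold od; rewrite plus_INR; ring. Qed.

Lemma sigma_eq p : (1 <= p)%nat -> sigma_odd 2 p = 4 * AA p.
Proof.
  intros Hp.
  set (c := fun k m => 4 * (/ od k ^ p * / (2 * INR m + 2) ^ 2)).
  assert (Hterm : forall m, S_odd p (S m) / INR (S m) ^ 2 = sum_n (fun k => c k m) m).
  { intros m. unfold c. rewrite sum_n_scal_l_R, sum_n_scal_r_R.
    assert (HS : S_odd p (S m) = sum_n (fun k => / od k ^ p) m).
    { unfold S_odd. rewrite <- sum_n_m_S. unfold sum_n. apply sum_n_m_ext; intros k.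
      rewrite S_INR; unfold od; f_equal; f_equal; ring. }
    rewrite HS. rewrite S_INR.
    assert (0 <= INR m) by apply pos_INR.
    field. lra. }
  unfold sigma_odd. rewrite (Series_ext _ _ Hterm).
  assert (Hc : forall k j, c k (k + j)%nat = 4 * (/ od k ^ p * / (od k + od j) ^ 2)).
  { intros k j; unfold c; rewrite od_add; reflexivity. }
  rewrite tri.
  - rewrite (Series_ext _ (fun k => 4 * (/ od k ^ p * ff k))).
    + rewrite Series_scal_l. reflexivity.
    + intros k. rewrite (Series_ext _ _ (Hc k)). rewrite Series_scal_l, Series_scal_l. reflexivity.
  - intros k m; unfold c. apply Rmult_le_pos; [lra|]. apply Rmult_le_pos.
    apply Rlt_le, inv_od_pow_pos. apply Rlt_le, Rinv_0_lt_compat, pow_lt.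
    assert (0 <= INR m) by apply pos_INR; lra.
  - intros k. eapply ex_series_ext. intros j; symmetry; apply Hc.
    apply ex_series_scal_R. apply ex_series_scal_R. apply (f_bnd k).
  - eapply ex_series_ext. intros k. symmetry.
    rewrite (Series_ext _ _ (Hc k)). rewrite Series_scal_l, Series_scal_l. reflexivity.
    apply ex_series_scal_R. apply AA_ex; auto.
Qed.

Definition T1 (p m n : nat) : R := (/ od n ^ p + / od m ^ p) / (od n + od m) ^ 2.

Lemma odsum_pos m n : 0 < od n + od m.
Proof. assert (H1 := od_pos n); assert (H2 := od_pos m); lra. Qed.

Lemma inv_od_pow_le1 n p : / od n ^ p <= 1.
Proof.
  rewrite <- Rinv_1. apply Rinv_le_contravar. lra.
  apply pow_R1_Rle. apply od_ge1.
Qed.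

Lemma D2 p : (1 <= p)%nat ->
  ex_series (fun m => Series (T1 p m)) /\ Series (fun m => Series (T1 p m)) = 2 * AA p.
Proof.
  intros Hp.
  set (a := fun n m => / od n ^ p * / (od n + od m) ^ 2).
  assert (Hsplit : forall m n, T1 p m n = a n m + / od m ^ p * / (od m + od n) ^ 2).
  { intros m n; unfold T1, a. rewrite (Rplus_comm (od m) (od n)). unfold Rdiv. ring. }
  assert (Ha : forall n m, 0 <= a n m).
  { intros n m; unfold a. apply Rmult_le_pos. apply Rlt_le, inv_od_pow_pos.
    apply Rlt_le, Rinv_0_lt_compat, pow_lt, odsum_pos. }
  assert (Ear : forall n, ex_series (a n)).
  { intros n; unfold a. apply ex_series_scal_R. apply (f_bnd n). }
  assert (Hrow : forall n, Series (a n) = / od n ^ p * ff n).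
  { intros n; unfold a; rewrite Series_scal_l; reflexivity. }
  assert (Eas : ex_series (fun n => Series (a n))).
  { eapply ex_series_ext. intros; symmetry; apply Hrow. apply AA_ex; auto. }
  destruct (fubini a Ha Ear Eas) as [Ec [Ecs Heq]].
  assert (Hm : forall m, Series (T1 p m) = Series (fun n => a n m) + / od m ^ p * ff m).
  { intros m. rewrite (Series_ext _ _ (Hsplit m)). rewrite Series_plus; auto.
    rewrite Series_scal_l. reflexivity. apply ex_series_scal_R, (f_bnd m). }
  assert (E2 : ex_series (fun m => / od m ^ p * ff m)) by (apply AA_ex; auto).
  split.
  - eapply ex_series_ext. intros m; symmetry; apply Hm. apply (ex_series_plus _ _ Ecs E2).
  - rewrite (Series_ext _ _ Hm). rewrite Series_plus; auto.
    rewrite Heq, (Series_ext _ _ Hrow). unfold AA. ring.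
Qed.

Lemma pow_diff_le (x y : R) (p : nat) : 0 <= y <= x -> x <= 1 ->
  x ^ p - y ^ p <= INR p * (x - y).
Proof.
  intros Hxy Hx1. induction p.
  - simpl; lra.
  - rewrite S_INR. simpl.
    assert (H1 : y ^ p <= x ^ p) by (apply pow_incr; lra).
    assert (H2 : y ^ p <= 1) by (rewrite <- (pow1 p); apply pow_incr; lra).
    assert (H3 : 0 <= (1 - x) * (x ^ p - y ^ p)) by (apply Rmult_le_pos; lra).
    assert (H4 : 0 <= (1 - y ^ p) * (x - y)) by (apply Rmult_le_pos; lra).
    nra.
Qed.

Definition Q (p i j : nat) : R :=
  if lt_dec i j then (/ od i ^ p - / od j ^ p) / (od j - od i) ^ 2 else 0.

Lemma od_lt i j : (i < j)%nat -> od i + 2 <= od j.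
Proof. intros H. unfold od.
  assert (INR (S i) <= INR j) by (apply le_INR; lia). rewrite S_INR in *. lra. Qed.

Lemma Q_nonneg p i j : 0 <= Q p i j.
Proof.
  unfold Q. destruct (lt_dec i j) as [H|H]; [|lra].
  assert (H1 := od_lt i j H). assert (H0 := od_pos i).
  apply Rmult_le_pos.
  - assert (/ od j ^ p <= / od i ^ p).
    { apply Rinv_le_contravar. apply pow_lt; lra. apply pow_incr; lra. }
    lra.
  - apply Rlt_le, Rinv_0_lt_compat, pow_lt; lra.
Qed.

Lemma Q_bnd p i j : (i < j)%nat ->
  Q p i j <= INR p * (/ od i * / od j ^ 2 + / (od j - od i) * / od j ^ 2).
Proof.
  intros H. unfold Q. destruct (lt_dec i j) as [_|H']; [|lia].
  assert (H1 := od_lt i j H). assert (H0 := od_ge1 i).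
  assert (Hd := pow_diff_le (/ od i) (/ od j) p).
  rewrite !pow_inv in Hd.
  assert (Hxy : 0 <= / od j <= / od i).
  { split. apply Rlt_le, Rinv_0_lt_compat; lra. apply Rinv_le_contravar; lra. }
  assert (Hx1 : / od i <= 1). { rewrite <- Rinv_1; apply Rinv_le_contravar; lra. }
  specialize (Hd Hxy Hx1).
  replace (/ od i * / od j ^ 2 + / (od j - od i) * / od j ^ 2)
    with ((/ od i - / od j) / (od j - od i) ^ 2) by (field; repeat split; lra).
  unfold Rdiv. rewrite <- Rmult_assoc. apply Rmult_le_compat_r.
  apply Rlt_le, Rinv_0_lt_compat, pow_lt; lra. exact Hd.
Qed.

Lemma ex_series_plus_R (a b : nat -> R) : ex_series a -> ex_series b -> ex_series (fun n => a n + b n).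
Proof. intros A B; apply (ex_series_plus a b A B). Qed.

Definition R1 (i j : nat) : R := if lt_dec i j then / od i * / od j ^ 2 else 0.
Definition R2 (i j : nat) : R := if lt_dec i j then / (od j - od i) * / od j ^ 2 else 0.
Definition g2 (i d : nat) : R := / (2 * INR d + 2) * / (od i + 2 + 2 * INR d) ^ 2.

Lemma INR_sub_S i j : (i < j)%nat -> INR (j - S i) = INR j - INR i - 1.
Proof. intros H. rewrite minus_INR by lia. rewrite S_INR. ring. Qed.

Lemma R1_row i : ex_series (R1 i) /\ Series (R1 i) <= / od i ^ 2.
Proof.
  set (g := fun d => / (2 * INR i + 3 + 2 * INR d) ^ 2).
  assert (Heq : forall j, R1 i j = / od i * shiftk (S i) g j).
  { intros j. unfold R1, shiftk, g. destruct (lt_dec i j), (le_dec (S i) j); try lia.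
    - rewrite INR_sub_S by lia. unfold od. f_equal. f_equal. f_equal. ring.
    - ring. }
  assert (0 <= INR i) by apply pos_INR.
  destruct (sq_tail (2 * INR i + 3)) as [E S]; [lra|].
  fold g in E, S.
  split.
  - eapply ex_series_ext. intros; symmetry; apply Heq. apply ex_series_scal_R, shiftk_ex, E.
  - rewrite (Series_ext _ _ Heq), Series_scal_l, Series_shiftk.
    assert (H0 := od_ge1 i).
    apply Rle_trans with (/ od i * / (2 * (2 * INR i + 3 - 1))).
    apply Rmult_le_compat_l; auto. apply Rlt_le, Rinv_0_lt_compat; lra.
    replace (/ od i ^ 2) with (/ od i * / od i) by (field; lra).
    apply Rmult_le_compat_l. apply Rlt_le, Rinv_0_lt_compat; lra.
    apply Rinv_le_contravar; [lra|]. unfold od; lra.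
Qed.

Lemma R2_eq i j : R2 i j = shiftk (S i) (g2 i) j.
Proof.
  unfold R2, shiftk, g2. destruct (lt_dec i j), (le_dec (S i) j); try lia.
  - rewrite INR_sub_S by lia. unfold od. f_equal; f_equal; [|f_equal]; ring.
  - reflexivity.
Qed.

Lemma g2_nonneg i d : 0 <= g2 i d.
Proof.
  unfold g2. assert (0 <= INR d) by apply pos_INR. assert (H0 := od_pos i).
  apply Rmult_le_pos; apply Rlt_le, Rinv_0_lt_compat; [lra|]. apply pow_lt; lra.
Qed.

Lemma g2_row i : ex_series (g2 i).
Proof.
  assert (H0 := od_pos i).
  destruct (sq_tail (od i + 2)) as [E _]; [lra|].
  apply (ex_series_le_R _ (fun d => / (od i + 2 + 2 * INR d) ^ 2)); auto.
  intros d; split. apply g2_nonneg. unfold g2.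
  assert (0 <= INR d) by apply pos_INR.
  assert (0 < / (od i + 2 + 2 * INR d) ^ 2) by (apply Rinv_0_lt_compat, pow_lt; lra).
  assert (/ (2 * INR d + 2) <= 1) by (rewrite <- Rinv_1; apply Rinv_le_contravar; lra).
  assert (0 <= / (2 * INR d + 2)) by (apply Rlt_le, Rinv_0_lt_compat; lra).
  nra.
Qed.

Lemma g2_sums_ex : ex_series (fun i => Series (g2 i)).
Proof.
  set (b := fun d i => g2 i d).
  assert (Hb : forall d i, 0 <= b d i) by (intros; apply g2_nonneg).
  assert (Hbeq : forall d i, b d i = / (2 * INR d + 2) * / (2 * INR d + 3 + 2 * INR i) ^ 2).
  { intros d i; unfold b, g2, od. f_equal. f_equal. f_equal. ring. }
  assert (Er : forall d, ex_series (b d) /\ Series (b d) <= / od d ^ 2).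
  { intros d. assert (0 <= INR d) by apply pos_INR.
    destruct (sq_tail (2 * INR d + 3)) as [E S]; [lra|].
    split.
    - eapply ex_series_ext. intros; symmetry; apply Hbeq. apply ex_series_scal_R, E.
    - rewrite (Series_ext _ _ (Hbeq d)), Series_scal_l.
      apply Rle_trans with (/ (2 * INR d + 2) * / (2 * (2 * INR d + 3 - 1))).
      apply Rmult_le_compat_l; auto. apply Rlt_le, Rinv_0_lt_compat; lra.
      unfold od. rewrite <- Rinv_mult. apply Rinv_le_contravar.
      apply pow_lt; lra. nra. }
  assert (Es : ex_series (fun d => Series (b d))).
  { apply (ex_series_le_R _ (fun d => / od d ^ 2)); [|apply inv_od_sq_ex].
    intros d; split. apply Series_nonneg; auto. apply Er. }
  destruct (fubini b Hb (fun d => proj1 (Er d)) Es) as [_ [E _]].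
  exact E.
Qed.

Lemma R2_row i : ex_series (R2 i).
Proof. eapply ex_series_ext. intros; symmetry; apply R2_eq. apply shiftk_ex, g2_row. Qed.

Lemma R2_sums_ex : ex_series (fun i => Series (R2 i)).
Proof.
  eapply ex_series_ext; [|apply g2_sums_ex]. intros i.
  rewrite (Series_ext _ _ (R2_eq i)), Series_shiftk. reflexivity.
Qed.

Lemma R1_nonneg i j : 0 <= R1 i j.
Proof. unfold R1; destruct lt_dec; [|lra]. apply Rmult_le_pos.
  apply Rlt_le, Rinv_0_lt_compat, od_pos. apply Rlt_le, inv_od_pow_pos. Qed.

Lemma R2_nonneg i j : 0 <= R2 i j.
Proof. rewrite R2_eq. apply shiftk_nonneg, g2_nonneg. Qed.

Lemma Q_le p i j : Q p i j <= INR p * (R1 i j + R2 i j).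
Proof.
  destruct (lt_dec i j) as [H|H].
  - eapply Rle_trans. apply Q_bnd; auto. unfold R1, R2. destruct lt_dec; [|lia]. lra.
  - unfold Q, R1, R2. destruct lt_dec; [lia|]. assert (0 <= INR p) by apply pos_INR. lra.
Qed.

Lemma Q_row p i : ex_series (Q p i).
Proof.
  apply (ex_series_le_R _ (fun j => INR p * (R1 i j + R2 i j))).
  intros j; split. apply Q_nonneg. apply Q_le.
  apply ex_series_scal_R. apply (ex_series_plus _ _ (proj1 (R1_row i)) (R2_row i)).
Qed.

Lemma Q_sums_ex p : ex_series (fun i => Series (Q p i)).
Proof.
  apply (ex_series_le_R _ (fun i => INR p * (Series (R1 i) + Series (R2 i)))).
  - intros i; split. apply Series_nonneg, Q_nonneg.
    rewrite <- Series_plus, <- Series_scal_l. 2: apply (proj1 (R1_row i)). 2: apply R2_row.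
    apply Series_le. intros j; split. apply Q_nonneg. apply Q_le.
    apply ex_series_scal_R. apply (ex_series_plus _ _ (proj1 (R1_row i)) (R2_row i)).
  - apply ex_series_scal_R. apply (ex_series_plus_R _ _); [|apply R2_sums_ex].
    apply (ex_series_le_R _ (fun i => / od i ^ 2)); [|apply inv_od_sq_ex].
    intros i; split. apply Series_nonneg, R1_nonneg. apply R1_row.
Qed.

Definition T2 (p m n : nat) : R := Q p m n - Q p n m.

Lemma D3 p : (forall m, ex_series (T2 p m)) /\
  ex_series (fun m => Series (T2 p m)) /\ Series (fun m => Series (T2 p m)) = 0.
Proof.
  destruct (fubini (Q p) (Q_nonneg p) (Q_row p) (Q_sums_ex p)) as [Ec [Ecs Heq]].
  assert (Hm : forall m, ex_series (T2 p m) /\ Series (T2 p m) = Series (Q p m) - Series (fun n => Q p n m)).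
  { intros m. split.
    - apply (ex_series_minus _ _ (Q_row p m) (Ec m)).
    - unfold T2. apply Series_minus. apply Q_row. apply Ec. }
  split; [intros m; apply Hm|].
  assert (Heq2 : forall m, Series (T2 p m) = Series (Q p m) - Series (fun n => Q p n m)) by apply Hm.
  split.
  - eapply ex_series_ext. intros m; symmetry; apply Heq2.
    apply (ex_series_minus _ _ (Q_sums_ex p) Ecs).
  - rewrite (Series_ext _ _ Heq2). rewrite Series_minus; auto. rewrite Heq. ring.
    apply Q_sums_ex.
Qed.

Lemma sum_n_m_Sm_R (a : nat -> R) lo hi : (lo <= S hi)%nat ->
  @eq R (sum_n_m a lo (S hi)) (sum_n_m a lo hi + a (S hi)).
Proof. intros H; rewrite sum_n_Sm; auto. Qed.

Lemma sum_n_m_mult_l_R (C : R) (X : nat -> R) lo hi :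
  @eq R (sum_n_m (fun k => C * X k) lo hi) (C * sum_n_m X lo hi).
Proof. apply (sum_n_m_mult_l C X lo hi). Qed.

Lemma geo_sum (s : R) n :
  sum_n_m (fun j => INR j * s ^ j) 1 n * (1 - s) ^ 2
  = s - INR (S n) * s ^ (S n) + INR n * s ^ (S (S n)).
Proof.
  induction n.
  - rewrite sum_n_m_zero by lia. change (@zero R_AbelianMonoid) with 0. simpl. ring.
  - rewrite sum_n_m_Sm_R by lia. rewrite Rmult_plus_distr_r, IHn.
    rewrite !S_INR. simpl. ring.
Qed.

Lemma KAI (b : nat) (u v : R) : 0 < u -> 0 < v -> u <> v ->
  (/ u ^ (2*b+1) + / v ^ (2*b+1)) / (u + v) ^ 2 + (/ v ^ (2*b+1) - / u ^ (2*b+1)) / (v - u) ^ 2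
  = sum_n_m (fun j => -4 * INR j * / v ^ (2*j+1) * / u ^ (2*b+2-2*j)) 1 b
    + 2 * INR (2*b+1) * / v ^ (2*b+1) * / (u ^ 2 - v ^ 2).
Proof.
  intros Hu Hv Huv.
  set (s := u ^ 2 / v ^ 2).
  set (P := u ^ (2*b+2)). set (Qv := v ^ (2*b+2)).
  assert (HP : 0 < P) by (apply pow_lt; auto).
  assert (HQ : 0 < Qv) by (apply pow_lt; auto).
  assert (Hterm : forall j, (1 <= j <= b)%nat ->
    -4 * INR j * / v ^ (2*j+1) * / u ^ (2*b+2-2*j) = (-4 * / (v * P)) * (INR j * s ^ j)).
  { intros j Hj. unfold s, P.
    assert (E1 : u ^ (2*b+2) = u ^ (2*b+2-2*j) * u ^ (2*j)) by (rewrite <- pow_add; f_equal; lia).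
    assert (E2 : (u ^ 2 / v ^ 2) ^ j = u ^ (2*j) / v ^ (2*j)).
    { unfold Rdiv. rewrite Rpow_mult_distr, pow_inv, <- !pow_mult. reflexivity. }
    assert (E3 : v ^ (2*j+1) = v ^ (2*j) * v) by (rewrite pow_add; ring).
    rewrite E1, E2, E3.
    assert (0 < u ^ (2*b+2-2*j)) by (apply pow_lt; auto).
    assert (0 < u ^ (2*j)) by (apply pow_lt; auto).
    assert (0 < v ^ (2*j)) by (apply pow_lt; auto).
    field. repeat split; lra. }
  rewrite (sum_n_m_ext_loc _ (fun j => (-4 * / (v * P)) * (INR j * s ^ j))) by (intros; apply Hterm; lia).
  rewrite sum_n_m_mult_l_R.
  set (G := sum_n_m (fun j => INR j * s ^ j) 1 b).
  assert (Hs1 : 1 - s <> 0).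
  { unfold s. intro H. assert (Hv2 : v ^ 2 <> 0) by (apply pow_nonzero; lra).
    assert (E : u ^ 2 = v ^ 2).
    { replace (u ^ 2) with ((u ^ 2 / v ^ 2) * v ^ 2) by (field; lra).
      replace (u ^ 2 / v ^ 2) with 1 by lra. ring. }
    assert (E2 : (u - v) * (u + v) = 0) by (simpl in E; nra).
    apply Rmult_integral in E2. destruct E2; lra. }
  assert (HG : @eq R G ((s - INR (S b) * s ^ (S b) + INR b * s ^ (S (S b))) / (1 - s) ^ 2)).
  { assert (Hgeo := geo_sum s b). fold G in Hgeo.
    apply (Rmult_eq_reg_r ((1 - s) ^ 2)); [|apply pow_nonzero; auto].
    rewrite Hgeo. field. auto. }
  assert (Hsb : s ^ (S b) = P / Qv).
  { unfold s, P, Qv. unfold Rdiv. rewrite Rpow_mult_distr, pow_inv, <- !pow_mult.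
    replace (2 * S b)%nat with (2*b+2)%nat by lia. reflexivity. }
  assert (HuP : / u ^ (2*b+1) = u / P).
  { unfold P. replace (2*b+2)%nat with (S (2*b+1)) by lia.
    change (u ^ (S (2*b+1))) with (u * u ^ (2*b+1)).
    assert (0 < u ^ (2*b+1)) by (apply pow_lt; auto). field; repeat split; lra. }
  assert (HvQ : / v ^ (2*b+1) = v / Qv).
  { unfold Qv. replace (2*b+2)%nat with (S (2*b+1)) by lia.
    change (v ^ (S (2*b+1))) with (v * v ^ (2*b+1)).
    assert (0 < v ^ (2*b+1)) by (apply pow_lt; auto). field; repeat split; lra. }
  rewrite HG. replace (s ^ (S (S b))) with (s * s ^ (S b)) by reflexivity.
  rewrite Hsb, HuP, HvQ.
  replace (INR (2*b+1)) with (2 * INR b + 1) by (rewrite plus_INR, mult_INR; simpl; ring).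
  rewrite S_INR.
  unfold s in *.
  assert (v - u <> 0) by lra.
  assert (u ^ 2 - v ^ 2 <> 0).
  { intro E. assert (E2 : (u - v) * (u + v) = 0) by (simpl in E; nra).
    apply Rmult_integral in E2. destruct E2; lra. }
  field. repeat split; try lra.
Qed.

Lemma tele_long (b : nat -> R) : is_lim_seq b 0 -> forall L,
  is_series (fun n => b n - b (n + S L)%nat) (sum_n b L).
Proof.
  intros Hb L. induction L.
  - rewrite sum_O. eapply is_series_ext; [|apply tele1; auto].
    intros n; simpl. replace (n + 1)%nat with (S n) by lia. reflexivity.
  - set (c := fun n => b (n + S L)%nat).
    assert (Hc : is_lim_seq c 0) by (apply (is_lim_seq_incr_n b (S L)); exact Hb).
    assert (Hc1 := tele1 c Hc).
    assert (H := is_series_plus _ _ _ _ IHL Hc1).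
    rewrite sum_n_S_R.
    eapply is_series_ext; [|exact H].
    intros n; unfold c. change plus with Rplus.
    match goal with |- ?x = ?y => change (@eq R x y) end. replace (S n + S L)%nat with (n + S (S L))%nat by lia. ring.
Qed.

Lemma sum_refl N : forall (f : nat -> R), @eq R (sum_n f N) (sum_n (fun i => f (N - i)%nat) N).
Proof.
  induction N; intros f.
  - rewrite !sum_O. reflexivity.
  - assert (L : @eq R (sum_n f (S N)) (f 0%nat + sum_n (fun n => f (S n)) N)).
    { unfold sum_n at 1. rewrite sum_Sn_m by lia. rewrite <- sum_n_m_S. reflexivity. }
    assert (R : @eq R (sum_n (fun i => f (S N - i)%nat) (S N))
                 (sum_n (fun i => f (S N - i)%nat) N + f 0%nat)).
    { rewrite sum_n_S_R, Nat.sub_diag. reflexivity. }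
    rewrite L, R, IHN. rewrite Rplus_comm. f_equal.
    unfold sum_n. apply sum_n_m_ext_loc. intros k Hk. f_equal. lia.
Qed.

Definition bb (m n : nat) : R := if Nat.eq_dec n m then 0 else / (INR n - INR m).

Lemma bb_refl m i : (i <= 2 * m)%nat -> bb m (2 * m - i) = - bb m i.
Proof.
  intros Hi. unfold bb. destruct (Nat.eq_dec (2*m - i) m), (Nat.eq_dec i m); try lia.
  - ring.
  - rewrite minus_INR by lia. rewrite mult_INR. replace (INR 2) with 2 by (simpl; ring).
    replace (2 * INR m - INR i - INR m) with (- (INR i - INR m)) by ring.
    apply Rinv_opp.
Qed.

Lemma bb_sum0 m : @eq R (sum_n (bb m) (2 * m)) 0.
Proof.
  assert (H := sum_refl (2 * m) (bb m)).
  assert (H2 : @eq R (sum_n (fun i => bb m (2 * m - i)) (2 * m)) (-1 * sum_n (bb m) (2 * m))).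
  { rewrite <- sum_n_scal_l_R. unfold sum_n. apply sum_n_m_ext_loc. intros k Hk.
    rewrite bb_refl by lia. match goal with |- ?x = ?y => change (@eq R x y) end. ring. }
  rewrite H2 in H. lra.
Qed.

Lemma bb_lim m : is_lim_seq (bb m) 0.
Proof.
  apply (is_lim_seq_incr_n _ (S m)).
  apply is_lim_seq_ext with (fun n => / (1 + 1 * INR n)).
  - intros n. unfold bb. destruct (Nat.eq_dec (n + S m) m); [lia|].
    rewrite plus_INR, S_INR. f_equal. ring.
  - apply lim_inv_lin; lra.
Qed.

Lemma is_series_eq_lim (a : nat -> R) l l' : is_series a l -> l = l' -> is_series a l'.
Proof. intros H <-; exact H. Qed.

Lemma H_ser m : is_series (fun n => if Nat.eq_dec n m then 0 else / (od n ^ 2 - od m ^ 2))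
  (/ (4 * od m ^ 2)).
Proof.
  assert (Hv := od_pos m).
  assert (Hpt : forall n, (if Nat.eq_dec n m then 0 else / (od n ^ 2 - od m ^ 2)) =
     / (4 * od m) * (bb m n - bb m (n + S (2 * m))%nat) + pt m (/ (4 * od m ^ 2)) n).
  { intros n. unfold bb, pt.
    destruct (Nat.eq_dec (n + S (2*m)) m) as [e|ne]; [lia|].
    rewrite plus_INR, S_INR, mult_INR. replace (INR 2) with 2 by (simpl; ring).
    destruct (Nat.eq_dec n m) as [->|Hnm].
    - replace (INR m + (2 * INR m + 1) - INR m) with (od m) by (unfold od; ring).
      field. lra.
    - assert (INR n <> INR m) by (apply not_INR; auto).
      assert (0 <= INR n) by apply pos_INR. assert (0 <= INR m) by apply pos_INR.
      assert (INR n - INR m <> 0) by lra.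
      assert (INR n + (2 * INR m + 1) - INR m <> 0) by lra.
      assert (od n ^ 2 - od m ^ 2 = 4 * (INR n - INR m) * (INR n + (2 * INR m + 1) - INR m))
        by (unfold od; ring).
      assert (od n ^ 2 - od m ^ 2 <> 0).
      { rewrite H4. apply Rmult_integral_contrapositive. split; [|auto].
        apply Rmult_integral_contrapositive. split; [lra|auto]. }
      rewrite H4. unfold od in *. field. repeat split; auto; lra. }
  assert (H1 := is_series_scal_l (/ (4 * od m)) _ _ (tele_long (bb m) (bb_lim m) (2*m))).
  assert (H2 := is_series_pt m (/ (4 * od m ^ 2))).
  assert (H3 := is_series_plus _ _ _ _ H1 H2).
  eapply is_series_eq_lim. eapply is_series_ext; [|exact H3]. intros n. rewrite Hpt. reflexivity.
  rewrite bb_sum0.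
  change (@eq R (/ (4 * od m) * 0 + / (4 * od m ^ 2)) (/ (4 * od m ^ 2))). ring.
Qed.

Ltac Req := match goal with |- ?x = ?y => change (@eq R x y) end.

Lemma T1_ex p m : ex_series (T1 p m).
Proof.
  apply (ex_series_le_R _ (fun n => 2 * / (od m + od n) ^ 2)).
  - intros n. unfold T1. rewrite (Rplus_comm (od n) (od m)).
    assert (H1 := inv_od_pow_le1 n p). assert (H2 := inv_od_pow_le1 m p).
    assert (H3 := inv_od_pow_pos n p). assert (H4 := inv_od_pow_pos m p).
    assert (H5 : 0 < / (od m + od n) ^ 2) by (apply Rinv_0_lt_compat, pow_lt, odsum_pos).
    unfold Rdiv. split; nra.
  - apply ex_series_scal_R, (f_bnd m).
Qed.

Definition Ej (b m j n : nat) : R := if Nat.eq_dec n m then 0 else / od n ^ (2*b+2-2*j).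
Definition Hf (m n : nat) : R := if Nat.eq_dec n m then 0 else / (od n ^ 2 - od m ^ 2).

Definition RHSf (b m n : nat) : R :=
  pt m (/ od m ^ (2*b+3) / 2) n
  + sum_n_m (fun j => (-4 * INR j * / od m ^ (2*j+1)) * Ej b m j n) 1 b
  + (2 * INR (2*b+1) * / od m ^ (2*b+1)) * Hf m n.

Lemma pointwise b m n : T1 (2*b+1) m n + T2 (2*b+1) m n = RHSf b m n.
Proof.
  unfold RHSf, T2, Q, T1, Ej, Hf, pt.
  destruct (Nat.eq_dec n m) as [->|Hnm].
  - destruct (lt_dec m m); [lia|].
    rewrite (sum_n_m_ext _ (fun j => 0)).
    2:{ intros j. destruct (Nat.eq_dec m m); [|lia]. Req. ring. }
    rewrite sum_n_m_const, Rmult_0_r.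
    assert (Hv := od_pos m).
    replace (od m ^ (2*b+3)) with (od m ^ (2*b+1) * od m ^ 2) by (rewrite <- pow_add; f_equal; lia).
    assert (0 < od m ^ (2*b+1)) by (apply pow_lt; lra).
    destruct (Nat.eq_dec m m); [|lia]. Req. field. split; lra.
  - assert (Hu := od_pos n). assert (Hv := od_pos m).
    assert (Huv : od n <> od m).
    { unfold od. intro E. apply Hnm. apply INR_eq. lra. }
    rewrite Rplus_0_l, <- (KAI b (od n) (od m) Hu Hv Huv).
    destruct (lt_dec m n), (lt_dec n m); try lia; Req.
    + assert (od m - od n <> 0) by lra. field. repeat split; try lra.
      apply pow_nonzero; lra. apply pow_nonzero; lra.
    + assert (od m - od n <> 0) by lra. field. repeat split; try lra.
      apply pow_nonzero; lra. apply pow_nonzero; lra.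
Qed.

Lemma ex_series_minus_R (a b : nat -> R) : ex_series a -> ex_series b -> ex_series (fun n => a n - b n).
Proof. intros A B; apply (ex_series_minus a b A B). Qed.

Lemma Ej_ser b m j : (1 <= j <= b)%nat -> ex_series (Ej b m j) /\
  Series (Ej b m j) = lambda_odd (2*b+2-2*j) - / od m ^ (2*b+2-2*j).
Proof.
  intros Hj.
  assert (Hpt : forall n, Ej b m j n = / od n ^ (2*b+2-2*j) - pt m (/ od m ^ (2*b+2-2*j)) n).
  { intros n; unfold Ej, pt. destruct (Nat.eq_dec n m) as [->|]; ring. }
  assert (E1 : ex_series (fun n => / od n ^ (2*b+2-2*j))) by (apply lam_ex; lia).
  split.
  - eapply ex_series_ext. intros; symmetry; apply Hpt. apply ex_series_minus_R; auto. apply ex_series_pt.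
  - rewrite (Series_ext _ _ Hpt), Series_minus; auto. rewrite Series_pt, lam_eq. reflexivity.
    apply ex_series_pt.
Qed.

Lemma sum_n_m_plus_R (u v : nat -> R) lo hi :
  @eq R (sum_n_m (fun k => u k + v k) lo hi) (sum_n_m u lo hi + sum_n_m v lo hi).
Proof. apply (sum_n_m_plus u v lo hi). Qed.

Lemma sumINR b : @eq R (sum_n_m (fun j => INR j) 1 b) (INR b * (INR b + 1) / 2).
Proof.
  induction b.
  - rewrite sum_n_m_zero by lia. simpl. change (@zero R_AbelianMonoid) with 0. field.
  - rewrite sum_n_m_Sm_R by lia. rewrite IHb, S_INR. field.
Qed.

Definition Phi (b m : nat) : R :=
  INR (S b) * (2 * INR (S b) - 1) * / od m ^ (2*b+3)
  - 4 * sum_n_m (fun j => INR j * lambda_odd (2*b+2-2*j) * / od m ^ (2*j+1)) 1 b.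

Lemma perm b m : Series (T1 (2*b+1) m) + Series (T2 (2*b+1) m) = Phi b m.
Proof.
  destruct (D3 (2*b+1)) as [E2 _].
  rewrite <- Series_plus; [|apply T1_ex|apply E2].
  rewrite (Series_ext _ _ (pointwise b m)). unfold RHSf.
  set (c := fun j => -4 * INR j * / od m ^ (2*j+1)).
  set (g := fun j n => c j * Ej b m j n).
  assert (Eg : forall j, (1 <= j <= b)%nat -> ex_series (g j)).
  { intros j Hj. apply ex_series_scal_R, Ej_ser; auto. }
  destruct (Series_sum_n_m g 1 b Eg) as [EB SB].
  unfold g, c in EB, SB. cbv beta in EB, SB.
  assert (EH : ex_series (Hf m)) by (eexists; apply H_ser).
  rewrite Series_plus; [| |apply ex_series_scal_R; auto].
  2:{ apply ex_series_plus_R. apply ex_series_pt. exact EB. }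
  rewrite Series_plus; [|apply ex_series_pt|exact EB].
  rewrite Series_pt, SB, Series_scal_l.
  assert (SH : Series (Hf m) = / (4 * od m ^ 2)) by (apply is_series_unique, H_ser).
  rewrite SH.
  rewrite (sum_n_m_ext_loc _ (fun j => -4 * (INR j * lambda_odd (2*b+2-2*j) * / od m ^ (2*j+1))
                                    + 4 * / od m ^ (2*b+3) * INR j)).
  2:{ intros j Hj. rewrite Series_scal_l. rewrite (proj2 (Ej_ser b m j Hj)).
      unfold c. replace (od m ^ (2*b+3)) with (od m ^ (2*j+1) * od m ^ (2*b+2-2*j))
        by (rewrite <- pow_add; f_equal; lia).
      assert (0 < od m ^ (2*j+1)) by (apply pow_lt, od_pos).
      assert (0 < od m ^ (2*b+2-2*j)) by (apply pow_lt, od_pos).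
      Req. field. split; lra. }
  rewrite sum_n_m_plus_R.
  rewrite !sum_n_m_mult_l_R, sumINR.
  unfold Phi. rewrite !S_INR.
  replace (INR (2*b+1)) with (2 * INR b + 1) by (rewrite plus_INR, mult_INR; simpl; ring).
  replace (od m ^ (2*b+3)) with (od m ^ (2*b+1) * od m ^ 2) by (rewrite <- pow_add; f_equal; lia).
  assert (0 < od m ^ (2*b+1)) by (apply pow_lt, od_pos).
  assert (Hv := od_pos m).
  field. split; lra.
Qed.

Lemma Phi_ser b : ex_series (Phi b) /\
  Series (Phi b) = INR (S b) * (2 * INR (S b) - 1) * lambda_odd (2*b+3)
    - 4 * sum_n_m (fun j => INR j * lambda_odd (2*b+2-2*j) * lambda_odd (2*j+1)) 1 b.
Proof.
  set (g := fun j m => INR j * lambda_odd (2*b+2-2*j) * / od m ^ (2*j+1)).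
  assert (Eg : forall j, (1 <= j <= b)%nat -> ex_series (g j)).
  { intros j Hj. unfold g. apply ex_series_scal_R. apply lam_ex. lia. }
  destruct (Series_sum_n_m g 1 b Eg) as [EB SB].
  unfold g in EB, SB.
  assert (E1 : ex_series (fun m => INR (S b) * (2 * INR (S b) - 1) * / od m ^ (2*b+3))).
  { apply ex_series_scal_R, lam_ex. lia. }
  assert (E2 : ex_series (fun m => 4 * sum_n_m (fun j => INR j * lambda_odd (2*b+2-2*j) * / od m ^ (2*j+1)) 1 b)).
  { apply ex_series_scal_R. exact EB. }
  split.
  - unfold Phi. apply ex_series_minus_R; auto.
  - unfold Phi. rewrite Series_minus; auto.
    rewrite !Series_scal_l. rewrite SB. rewrite <- lam_eq. f_equal. f_equal.
    apply sum_n_m_ext_loc. intros j Hj. rewrite Series_scal_l. rewrite <- lam_eq. reflexivity.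
Qed.

Lemma main_b b : sigma_odd 2 (2*b+1) =
  2 * INR (S b) * (2 * INR (S b) - 1) * lambda_odd (2*b+3)
  - 8 * sum_n_m (fun j => INR j * lambda_odd (2*b+2-2*j) * lambda_odd (2*j+1)) 1 b.
Proof.
  rewrite sigma_eq by lia.
  destruct (D2 (2*b+1)) as [E1 S1]; [lia|].
  destruct (D3 (2*b+1)) as [_ [E2 S2]].
  assert (H : 2 * AA (2*b+1) = Series (Phi b)).
  { rewrite <- S1. rewrite <- (Rplus_0_r (Series _)). rewrite <- S2.
    rewrite <- Series_plus; auto. apply Series_ext. intros m. apply perm. }
  destruct (Phi_ser b) as [_ HP]. rewrite HP in H.
  replace (4 * AA (2*b+1)) with (2 * (2 * AA (2*b+1))) by ring.
  rewrite H. ring.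
Qed.

Theorem mainTheorem6 (a : nat) (ha : (1 <= a)%nat) :
  sigma_odd 2 (2 * a - 1)%nat =
  2 * INR a * (2 * INR a - 1) * lambda_odd (2 * a + 1)%nat
  - 8 * sum_n_m (fun j => INR j * lambda_odd (2 * a - 2 * j)%nat * lambda_odd (2 * j + 1)%nat)
          1 (a - 1)%nat.
Proof.
  destruct a as [|b]; [lia|].
  replace (2 * S b - 1)%nat with (2*b+1)%nat by lia.
  replace (2 * S b + 1)%nat with (2*b+3)%nat by lia.
  replace (S b - 1)%nat with b by lia.
  rewrite main_b.
  f_equal. f_equal. apply sum_n_m_ext. intros j. f_equal. f_equal. f_equal. lia.
Qed.
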